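(* Let $Q$ be a non-negative (twice differentiable) function on $[0,\infty)$ satisfying $xQ''(x)+\beta Q'(x)\le0$, where $\beta\ge0$ is a constant. Then $Q$ is increasing if $0\le\beta<1$, decreasing if $\beta>1$, and constant if $\beta=1$. *)

(* Defs.v *)
From Stdlib Require Import Reals.
From Coquelicot Require Import Coquelicot.
Open Scope R_scope.

Definition is_right_derive (f : R -> R) (x l : R) : Prop :=
  filterlim (fun h => (f (x + h) - f x) / h) (at_right 0) (locally l).

Definition derive_on_nonneg (f f' : R -> R) : Prop :=
  (forall x, 0 < x -> is_derive f x (f' x)) /\ is_right_derive f 0 (f' 0).

(* Main.v *)
Require Import Defs.
From Stdlib Require Import Reals.
From Coquelicot Require Import Coquelicot.
From Stdlib Require Import Lra.
Open Scope R_scope.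

Lemma nonincr_seg (g dg : R -> R) (x y : R) :
  x <= y -> (forall t, x <= t <= y -> is_derive g t (dg t)) ->
  (forall t, x <= t <= y -> dg t <= 0) -> g y <= g x.
Proof.
  intros Hxy Hd Hn.
  destruct (MVT_gen g x y dg) as [c [Hc Heq]].
  - intros t Ht. rewrite Rmin_left in Ht by lra. rewrite Rmax_right in Ht by lra.
    apply Hd; lra.
  - intros t Ht. rewrite Rmin_left in Ht by lra. rewrite Rmax_right in Ht by lra.
    apply continuity_pt_filterlim.
    apply (ex_derive_continuous (K:=R_AbsRing) (V:=R_NormedModule) g t).
    eexists. apply Hd; lra.
  - rewrite Rmin_left in Hc by lra. rewrite Rmax_right in Hc by lra.
    assert (dg c <= 0) by (apply Hn; lra). nra.
Qed.

Lemma right_bound (f : R -> R) (l : R) :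
  is_right_derive f 0 l ->
  exists d, 0 < d /\ forall h, 0 < h < d -> Rabs (f h - f 0) <= h * (Rabs l + 1).
Proof.
  intros H. unfold is_right_derive in H.
  apply filterlim_locally with (eps := mkposreal 1 Rlt_0_1) in H.
  destruct H as [d Hd]. exists d. split; [apply cond_pos|].
  intros h Hh.
  assert (B : ball 0 d h).
  { change (Rabs (h - 0) < d). rewrite Rminus_0_r, Rabs_pos_eq; lra. }
  specialize (Hd h B (proj1 Hh)). change (Rabs ((f (0 + h) - f 0) / h - l) < 1) in Hd.
  rewrite Rplus_0_l in Hd.
  assert (E : f h - f 0 = h * ((f h - f 0) / h)) by (field; lra).
  rewrite E, Rabs_mult, (Rabs_pos_eq h) by lra.
  apply Rmult_le_compat_l; [lra|].
  assert (Rabs ((f h - f 0) / h) <= Rabs ((f h - f 0) / h - l) + Rabs l).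
  { replace ((f h - f 0) / h) with (((f h - f 0) / h - l) + l) at 1 by ring.
    apply Rabs_triang. }
  lra.
Qed.

Lemma nonincr_closed (g dg : R -> R) (l : R) (x y : R) :
  (forall t, 0 < t -> is_derive g t (dg t)) -> (forall t, 0 < t -> dg t <= 0) ->
  is_right_derive g 0 l -> 0 <= x -> x <= y -> g y <= g x.
Proof.
  intros Hd Hn Hr Hx Hxy.
  destruct (Rlt_or_le 0 x) as [Hx'|Hx'].
  - apply (nonincr_seg g dg); auto; intros t Ht; [apply Hd|apply Hn]; lra.
  - assert (x = 0) by lra. subst x.
    destruct (Req_dec y 0) as [->|Hy]; [lra|].
    destruct (right_bound g l Hr) as [d [Hd0 Hb]].
    destruct (Rle_or_lt (g y) (g 0)) as [|Hlt]; [auto|exfalso].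
    set (K := Rabs l + 1). assert (HK : 0 < K) by (unfold K; pose proof (Rabs_pos l); lra).
    set (e := g y - g 0).
    set (h := Rmin (Rmin d y) (e / K) / 2).
    assert (Hm1 : Rmin (Rmin d y) (e / K) <= Rmin d y) by apply Rmin_l.
    assert (Hm2 : Rmin (Rmin d y) (e / K) <= e / K) by apply Rmin_r.
    assert (Hm3 : Rmin d y <= d) by apply Rmin_l.
    assert (Hm4 : Rmin d y <= y) by apply Rmin_r.
    assert (Hpos : 0 < Rmin (Rmin d y) (e / K)).
    { apply Rmin_pos; [apply Rmin_pos; lra|]. unfold e. apply Rdiv_lt_0_compat; lra. }
    assert (Hh : 0 < h < d) by (unfold h; lra).
    assert (Hhy : h <= y) by (unfold h; lra).
    assert (HhK : h * K < e).
    { assert (H0 : h < e / K) by (unfold h; lra).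
      apply Rmult_lt_compat_r with (r := K) in H0; [|lra].
      unfold Rdiv in H0. rewrite Rmult_assoc, Rinv_l in H0; lra. }
    pose proof (Hb h Hh) as Hb'. fold K in Hb'.
    pose proof (Rle_abs (g h - g 0)).
    assert (g y <= g h).
    { apply (nonincr_seg g dg); auto; intros t Ht; [apply Hd|apply Hn]; lra. }
    unfold e in HhK. lra.
Qed.

Theorem lemma19 (Q Q1 Q2 : R -> R) (beta : R)
  (hbeta : 0 <= beta)
  (hQ1 : derive_on_nonneg Q Q1)
  (hQ2 : derive_on_nonneg Q1 Q2)
  (hnonneg : forall x, 0 <= x -> 0 <= Q x)
  (hineq : forall x, 0 <= x -> x * Q2 x + beta * Q1 x <= 0) :
  (beta < 1 -> forall x y, 0 <= x -> x <= y -> Q x <= Q y) /\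
  (beta > 1 -> forall x y, 0 <= x -> x <= y -> Q y <= Q x) /\
  (beta = 1 -> forall x y, 0 <= x -> 0 <= y -> Q x = Q y).
Proof.
  destruct hQ1 as [HQd HQr]. destruct hQ2 as [HQ1d HQ1r].
  set (P := fun x => Rpower x beta * Q1 x).
  assert (HPd : forall x, 0 < x -> is_derive P x
      (beta * Rpower x (beta - 1) * Q1 x + Rpower x beta * Q2 x)).
  { intros x Hx. unfold P.
    apply (is_derive_ext_loc (fun x => Rpower x beta * Q1 x)); [apply filter_forall; auto|].
    replace (beta * Rpower x (beta - 1) * Q1 x + Rpower x beta * Q2 x)
      with ((beta * Rpower x (beta - 1)) * Q1 x + Rpower x beta * Q2 x) by ring.
    apply (is_derive_mult (fun x => Rpower x beta) Q1).
    - apply is_derive_Reals. apply derivable_pt_lim_power. auto.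
    - apply HQ1d; auto.
    - intros; apply Rmult_comm. }
  assert (HPn : forall x, 0 < x ->
      beta * Rpower x (beta - 1) * Q1 x + Rpower x beta * Q2 x <= 0).
  { intros x Hx.
    assert (E : Rpower x beta = Rpower x (beta - 1) * x).
    { rewrite <- (Rpower_1 x Hx) at 3. rewrite <- Rpower_plus. f_equal; ring. }
    rewrite E. assert (0 < Rpower x (beta - 1)) by (unfold Rpower; apply exp_pos).
    pose proof (hineq x (Rlt_le _ _ Hx)). nra. }
  assert (HPm : forall x y, 0 < x -> x <= y -> P y <= P x).
  { intros x y Hx Hxy. apply (nonincr_seg P (fun x => beta * Rpower x (beta - 1) * Q1 x + Rpower x beta * Q2 x) x y Hxy).
    - intros t Ht; apply HPd; lra.
    - intros t Ht; apply HPn; lra. }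
  assert (Rpos : forall x, 0 < Rpower x beta) by (intros; unfold Rpower; apply exp_pos).
  assert (CA : beta <= 1 -> forall x, 0 < x -> 0 <= Q1 x).
  { intros Hb x0 Hx0. destruct (Rle_or_lt 0 (Q1 x0)) as [|Hneg]; [auto|exfalso].
    set (c := - P x0).
    assert (Hc : 0 < c) by (unfold c, P; pose proof (Rpos x0); nra).
    set (x1 := Rmax x0 1).
    assert (Hx1 : x0 <= x1 /\ 1 <= x1) by (unfold x1; split; [apply Rmax_l|apply Rmax_r]).
    assert (HQ1b : forall t, x1 <= t -> Q1 t <= - c / t).
    { intros t Ht. assert (HPt : P t <= - c) by (unfold c; rewrite Ropp_involutive; apply HPm; lra).
      unfold P in HPt. pose proof (Rpos t).
      assert (Q1 t < 0) by nra.
      assert (Rpower t beta <= t).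
      { rewrite <- (Rpower_1 t) at 2 by lra. apply Rle_Rpower; lra. }
      assert (Q1 t * t <= - c) by nra.
      apply Rmult_le_reg_r with t; [lra|]. unfold Rdiv. rewrite Rmult_assoc, Rinv_l by lra. lra. }
    set (F := fun t => Q t + c * ln t).
    assert (HF : forall y, x1 <= y -> F y <= F x1).
    { intros y Hy. apply (nonincr_seg F (fun t => Q1 t + c * / t) x1 y Hy).
      - intros t Ht. unfold F. apply (is_derive_plus Q (fun t => c * ln t)).
        + apply HQd; lra.
        + apply is_derive_scal. apply is_derive_ln. lra.
      - intros t Ht. pose proof (HQ1b t (proj1 Ht)). unfold Rdiv in H. lra. }
    set (y := Rmax x1 (exp ((Q x1 + c * ln x1 + 1) / c))).
    assert (Hy1 : x1 <= y) by apply Rmax_l.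
    assert (Hy2 : exp ((Q x1 + c * ln x1 + 1) / c) <= y) by apply Rmax_r.
    assert (Hl : (Q x1 + c * ln x1 + 1) / c <= ln y).
    { rewrite <- (ln_exp ((Q x1 + c * ln x1 + 1) / c)) at 1. apply ln_le; auto. apply exp_pos. }
    assert (Hl' : Q x1 + c * ln x1 + 1 <= c * ln y).
    { apply Rmult_le_compat_l with (r := c) in Hl; [|lra].
      replace (c * ((Q x1 + c * ln x1 + 1) / c)) with (Q x1 + c * ln x1 + 1) in Hl by (field; lra).
      lra. }
    pose proof (HF y Hy1). unfold F in H. pose proof (hnonneg y ltac:(lra)). lra. }
  assert (CB : 0 < beta -> forall x, 0 < x -> Q1 x <= 0).
  { intros Hb x0 Hx0. destruct (Rle_or_lt (Q1 x0) 0) as [|Hpos]; [auto|exfalso].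
    set (c := P x0). assert (Hc : 0 < c) by (unfold c, P; pose proof (Rpos x0); nra).
    destruct (right_bound Q1 (Q2 0) HQ1r) as [d [Hd Hbd]].
    set (M := Rabs (Q1 0) + d * (Rabs (Q2 0) + 1) + 1).
    assert (HM : forall h, 0 < h < d -> Q1 h <= M).
    { intros h Hh. pose proof (Hbd h Hh). pose proof (Rle_abs (Q1 h - Q1 0)).
      pose proof (Rle_abs (Q1 0)). pose proof (Rabs_pos (Q2 0)).
      unfold M. nra. }
    assert (HM0 : 0 < M) by (unfold M; pose proof (Rabs_pos (Q1 0)); pose proof (Rabs_pos (Q2 0)); nra).
    set (z := exp (ln (c / M) / beta - 1)).
    assert (Hz : 0 < z) by apply exp_pos.
    set (h := Rmin (Rmin x0 (d / 2)) z).
    assert (Hh1 : h <= Rmin x0 (d/2)) by apply Rmin_l.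
    assert (Hh2 : h <= z) by apply Rmin_r.
    assert (Hh3 : Rmin x0 (d/2) <= x0) by apply Rmin_l.
    assert (Hh4 : Rmin x0 (d/2) <= d/2) by apply Rmin_r.
    assert (Hh0 : 0 < h) by (apply Rmin_pos; [apply Rmin_pos|]; lra).
    assert (HPh : c <= P h) by (unfold c; apply HPm; lra).
    unfold P in HPh.
    assert (Hpw : Rpower h beta < c / M).
    { unfold Rpower. rewrite <- (exp_ln (c / M)) by (apply Rdiv_lt_0_compat; lra).
      apply Rle_lt_trans with (exp (beta * (ln (c / M) / beta - 1))).
      - destruct (Rle_lt_or_eq_dec _ _ (ln_le h z Hh0 Hh2)) as [Hlt|Heq].
        + apply Rlt_le, exp_increasing. apply Rmult_lt_compat_l; auto.
          unfold z in Hlt. rewrite ln_exp in Hlt. auto.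
        + unfold z in Heq; rewrite ln_exp in Heq. rewrite Heq. lra.
      - apply exp_increasing. replace (beta * (ln (c / M) / beta - 1)) with (ln (c/M) - beta) by (field; lra).
        lra. }
    pose proof (HM h ltac:(lra)). pose proof (Rpos h).
    assert (Rpower h beta * Q1 h <= Rpower h beta * M) by (apply Rmult_le_compat_l; lra).
    assert (Rpower h beta * M < c).
    { apply Rmult_lt_compat_r with (r := M) in Hpw; [|lra].
      unfold Rdiv in Hpw. rewrite Rmult_assoc, Rinv_l in Hpw; lra. }
    lra. }
  assert (Inc : (forall t, 0 < t -> 0 <= Q1 t) -> forall x y, 0 <= x -> x <= y -> Q x <= Q y).
  { intros H x y Hx Hxy.
    assert (- Q y <= - Q x).
    { apply (nonincr_closed (fun t => - Q t) (fun t => - Q1 t) (- Q1 0) x y); auto.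
      - intros t Ht. apply (is_derive_opp Q). auto.
      - intros t Ht. pose proof (H t Ht). lra.
      - unfold is_right_derive.
        apply (filterlim_ext (fun h => - ((Q (0 + h) - Q 0) / h))).
        + intros h. unfold Rdiv. ring.
        + apply (filterlim_comp _ _ _ (fun h => (Q (0 + h) - Q 0) / h) (fun v => - v) _ (locally (Q1 0)) _ HQr).
          apply (filterlim_opp (Q1 0)). }
    lra. }
  assert (Dec : (forall t, 0 < t -> Q1 t <= 0) -> forall x y, 0 <= x -> x <= y -> Q y <= Q x).
  { intros H x y Hx Hxy. apply (nonincr_closed Q Q1 (Q1 0) x y); auto. }
  split; [|split].
  - intros Hb. apply Inc, CA. lra.
  - intros Hb. apply Dec, CB. lra.
  - intros Hb x y Hx Hy.
    assert (I := Inc (CA ltac:(lra))). assert (D := Dec (CB ltac:(lra))).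
    destruct (Rle_or_lt x y).
    + pose proof (I x y Hx H). pose proof (D x y Hx H). lra.
    + pose proof (I y x Hy (Rlt_le _ _ H)). pose proof (D y x Hy (Rlt_le _ _ H)). lra.
Qed.
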